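(* Let $T:{\mathcal{Q}Sym}\to{\mathcal{Q}Sym}$ be the linear map with $T(F_\alpha)=F_{\tilde\alpha}$ for every composition $\alpha$. Then \[\zeta_+\circ T=\zeta_+\quad\text{and}\quad \zeta_-\circ T=\bigl((\zeta^{-1})_-\bigr)^{-1}.\]
   Context: $\Bbbk$ is a field of characteristic $\neq2$. For a composition $\alpha=(a_1,\ldots,a_k)$, $\tilde\alpha=(a_k,\ldots,a_1)$ is its reversal. ${\mathcal{Q}Sym}$ is the graded connected Hopf algebra of quasi-symmetric functions over $\Bbbk$, with monomial basis $M_\alpha=\sum_{i_1<\cdots<i_k}x_{i_1}^{a_1}\cdots x_{i_k}^{a_k}$, fundamental basis $F_\alpha=\sum_{\beta\ge\alpha}M_\beta$ ($\beta\ge\alpha$: $\beta$ refines $\alpha$), ordinary product, coproduct $\Delta(M_\alpha)=\sum_{i=0}^kM_{(a_1,\ldots,a_i)}\otimes M_{(a_{i+1},\ldots,a_k)}$. Convolution $\rho\psi=m\circ(\rho\otimes\psi)\circ\Delta$; characters (algebra morphisms to $\Bbbk$) form a group under convolution, the inverse of $\varphi$ being denoted $\varphi^{-1}$. For a functional $\varphi$, $\bar\varphi(h)=(-1)^n\varphi(h)$ on homogeneous $h$ of degree $n$; $\varphi$ is even if $\bar\varphi=\varphi$ and odd if $\bar\varphi=\varphi^{-1}$. Every character $\varphi$ factors uniquely as $\varphi=\varphi_+\varphi_-$ with $\varphi_+$ an even character and $\varphi_-$ an odd character. $\zeta$ is the universal character $\zeta(f)=f(1,0,0,\ldots)$ (so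 $\zeta(F_\alpha)=1$ if $\alpha=()$ or $\alpha=(n)$, else $0$); $\zeta_\pm$ are its even and odd parts, and $(\zeta^{-1})_\pm$ are the even and odd parts of its convolution inverse $\zeta^{-1}$. *)

(* Defs.v *)
(* Linear functionals on QSym over a field K are represented
   by their values on the monomial basis: phi : seq nat -> K, phi alpha = phi(M_alpha).
   Only values on compositions (sequences of positive integers) matter. *)
From HB Require Import structures.
From mathcomp Require Import all_boot all_order all_algebra.
Set Implicit Arguments.
Unset Strict Implicit.
Unset Printing Implicit Defensive.
Import GRing.Theory.
Local Open Scope ring_scope.

Definition is_comp (a : seq nat) : bool := all (fun x => 0 < x)%N a.

(* quasi-shuffles (with multiplicity): M_a * M_b = \sum_(g <- qsh a b) M_g *)
Fixpoint qsh (a b : seq nat) {struct a} : seq (seq nat) :=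
  match a with
  | [::] => [:: b]
  | x :: a' =>
    let fix qsh_a (b : seq nat) : seq (seq nat) :=
      match b with
      | [::] => [:: x :: a']
      | y :: b' =>
          map (cons x) (qsh a' (y :: b'))
          ++ map (cons y) (qsh_a b')
          ++ map (cons (x + y)%N) (qsh a' b')
      end
    in qsh_a b
  end.

Fixpoint comps_aux (f n : nat) : seq (seq nat) :=
  match f with
  | 0 => if n == 0%N then [:: [::]] else [::]
  | f'.+1 => if n == 0%N then [:: [::]]
             else flatten [seq map (cons i) (comps_aux f' (n - i)) | i <- iota 1 n]
  end.
Definition comps (n : nat) : seq (seq nat) := comps_aux n n.

(* all compositions refining a (i.e. beta >= a in the paper's order) *)
Fixpoint refinements (a : seq nat) : seq (seq nat) :=
  match a with
  | [::] => [:: [::]]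
  | x :: a' => [seq c ++ r | c <- comps x, r <- refinements a']
  end.

Section Functionals.
Variable K : fieldType.
Implicit Types phi psi : seq nat -> K.

(* value of the functional phi on F_a = \sum_{b >= a} M_b *)
Definition Fval phi (a : seq nat) : K := \sum_(b <- refinements a) phi b.

(* the functional phi \o T, given on the fundamental basis:
   (phi \o T)(F_a) = phi(F_{rev a}).  [compT_eq phi psi] means phi \o T = psi. *)
Definition compT_eq phi psi : Prop :=
  forall a, is_comp a -> Fval phi (rev a) = Fval psi a.

Definition character phi : Prop :=
  phi [::] = 1 /\
  forall a b, is_comp a -> is_comp b -> phi a * phi b = \sum_(g <- qsh a b) phi g.

(* convolution, coproduct = deconcatenation on M *)
Definition conv phi psi (a : seq nat) : K :=
  \sum_(i < (size a).+1) phi (take i a) * psi (drop i a).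

(* convolution inverse: phi^{-1}(M_a) defined by (phi phi^{-1})(M_a) = eps(M_a) *)
Fixpoint cinv_aux phi (n : nat) (a : seq nat) : K :=
  match n with
  | 0 => (phi [::])^-1 * (a == [::])%:R
  | n'.+1 => (phi [::])^-1 *
      ((a == [::])%:R - \sum_(i < size a) phi (take i.+1 a) * cinv_aux phi n' (drop i.+1 a))
  end.
Definition cinv phi (a : seq nat) : K := cinv_aux phi (size a) a.

(* bar phi (h) = (-1)^n phi(h) for h homogeneous of degree n; deg M_a = |a| *)
Definition bar phi (a : seq nat) : K := (-1) ^+ (sumn a) * phi a.

Definition even_fun phi : Prop := forall a, is_comp a -> bar phi a = phi a.
Definition odd_fun phi : Prop := forall a, is_comp a -> bar phi a = cinv phi a.

Definition fun_eq phi psi : Prop := forall a, is_comp a -> phi a = psi a.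

(* universal character zeta(f) = f(1,0,0,...): zeta(M_a) = 1 iff a has <= 1 part *)
Definition zeta (a : seq nat) : K := (size a <= 1)%N%:R.

End Functionals.

(* Main.v *)
Require Import Defs.
From mathcomp Require Import all_boot all_order all_algebra ring zify.
Import GRing.Theory.
Local Open Scope ring_scope.

Lemma mem_fc (s : seq nat) (t : nat -> seq (seq nat)) x b :
  (x :: b \in flatten [seq map (cons i) (t i) | i <- s]) = (x \in s) && (b \in t x).
Proof.
elim: s => //= i s IH; rewrite mem_cat IH in_cons.
have -> : (x :: b \in map (cons i) (t i)) = (x == i) && (b \in t i).
  apply/mapP/andP => [[c Hc [-> ->]]|[/eqP -> H]]; first by rewrite eqxx.
  by exists b.
by case: eqP => [->|] //=; case: (i \in s); rewrite ?andbF ?orbF ?orbb.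
Qed.

Lemma nil_fc (s : seq nat) (t : nat -> seq (seq nat)) :
  ([::] \in flatten [seq map (cons i) (t i) | i <- s]) = false.
Proof.
elim: s => //= i s IH; rewrite mem_cat IH orbF.
by apply/mapP => [[c _]].
Qed.

Lemma uniq_fc (s : seq nat) (t : nat -> seq (seq nat)) :
  uniq s -> (forall i, uniq (t i)) -> uniq (flatten [seq map (cons i) (t i) | i <- s]).
Proof.
elim: s => //= i s IH /andP[ni us] ut; rewrite cat_uniq IH // andbT.
rewrite map_inj_uniq ?ut //=; last by move=> ? ? [].
apply/hasP => [[[|x b]]]; first by rewrite nil_fc.
rewrite mem_fc => /andP[xs _] /mapP[c _ [ex _]].
by move: ni; rewrite -ex xs.
Qed.

Lemma mem_comps_aux f n b : (n <= f)%N ->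
  (b \in comps_aux f n) = is_comp b && (sumn b == n).
Proof.
have nilcase : forall b, (b \in [:: [::]]) = is_comp b && (sumn b == 0%N).
  move=> [|x c]; first by [].
  by rewrite inE /=; case: x => [|x] //=; rewrite addSn andbF.
elim: f n b => [|f IH] n b.
  by rewrite leqn0 => /eqP ->.
move=> Hn /=; case: eqP => [->|/eqP n0]; first exact: nilcase.
case: b => [|x c]; first by rewrite nil_fc /= eq_sym (negbTE n0).
rewrite (mem_fc _ (fun i => comps_aux f (n - i))) mem_iota /=.
case Hx: (1 <= x < 1 + n)%N => /=.
  rewrite IH; last by lia.
  have -> : (0 < x)%N by lia.
  by case: (is_comp c) => //=; apply/eqP/eqP; lia.
by case: (0 < x)%N (is_comp c) Hx => [] [] //= Hx; apply/esym/eqP; lia.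
Qed.

Lemma uniq_comps_aux f n : uniq (comps_aux f n).
Proof.
elim: f n => [|f IH] n /=; first by case: eqP.
case: eqP => // _; apply: uniq_fc => //; exact: iota_uniq.
Qed.

Lemma mem_comps n b : (b \in comps n) = is_comp b && (sumn b == n).
Proof. exact: mem_comps_aux. Qed.

Section S.
Variable K : fieldType.
Implicit Types f g h : seq nat -> K.

Definition E (a : seq nat) : K := (a == [::])%:R.

Lemma comp_take i a : is_comp a -> is_comp (take i a).
Proof. by rewrite /is_comp -{1}(cat_take_drop i a) all_cat => /andP[]. Qed.
Lemma comp_drop i a : is_comp a -> is_comp (drop i a).
Proof. by rewrite /is_comp -{1}(cat_take_drop i a) all_cat => /andP[]. Qed.

Lemma conv_ext f f' g g' a : (forall b, f b = f' b) -> (forall b, g b = g' b) ->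
  conv f g a = conv f' g' a.
Proof. by move=> Hf Hg; apply: eq_bigr => i _; rewrite Hf Hg. Qed.

Lemma conv_congr f f' g g' a : fun_eq f f' -> fun_eq g g' -> is_comp a ->
  conv f g a = conv f' g' a.
Proof.
by move=> Hf Hg ca; apply: eq_bigr => i _; rewrite Hf ?Hg ?comp_take ?comp_drop.
Qed.

Lemma conv_cons f g x a : conv f g (x :: a) =
  f [::] * g (x :: a) + conv (fun b => f (x :: b)) g a.
Proof. by rewrite /conv big_ord_recl. Qed.

Lemma conv_nil f g : conv f g [::] = f [::] * g [::].
Proof. by rewrite /conv big_ord_recl big_ord0 addr0. Qed.

Lemma conv_linl c f f' g a :
  conv (fun b => c * f b + f' b) g a = c * conv f g a + conv f' g a.
Proof.
rewrite /conv mulr_sumr -big_split /=; apply: eq_bigr => i _.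
by rewrite mulrDl mulrA.
Qed.

Lemma conv_assoc f g h a : conv (conv f g) h a = conv f (conv g h) a.
Proof.
elim: a f g h => [|x a IH] f g h; first by rewrite !conv_nil mulrA.
rewrite conv_cons conv_nil.
rewrite [conv f _ _]conv_cons.
rewrite (@conv_ext (fun b => conv f g (x :: b))
   (fun b => f [::] * g (x :: b) + conv (fun b => f (x :: b)) g b) h h); last first.
- by [].
- by move=> b; rewrite conv_cons.
rewrite conv_linl IH conv_cons; ring.
Qed.


Lemma conv_E_l g a : conv (@E) g a = g a.
Proof.
rewrite /conv big_ord_recl /= /E take0 drop0 eqxx mul1r big1 ?addr0 //.
by move=> i _; case: a i => [[]|x a i] //=; rewrite /bump /= mul0r.
Qed.

Lemma conv_E_r f a : conv f (@E) a = f a.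
Proof.
rewrite /conv big_ord_recr /= drop_size take_size /E eqxx mulr1 big1 ?add0r //.
move=> [i Hi] _ /=; suff -> : (drop i a == [::]) = false by rewrite mulr0.
by apply/negbTE; rewrite -size_eq0 size_drop subn_eq0 -ltnNge.
Qed.

Lemma cinv_auxE f n m a : (size a <= n)%N -> (size a <= m)%N ->
  cinv_aux f n a = cinv_aux f m a.
Proof.
elim: n m a => [|n IH] [|m] a /=.
- by [].
- by case: a => //= _ _; rewrite big_ord0 subr0.
- by case: a => //= _ _; rewrite big_ord0 subr0.
- move=> Hn Hm; congr (_ * (_ - _)); apply: eq_bigr => i _; congr (_ * _).
  by apply: IH; rewrite size_drop; lia.
Qed.

Lemma cinv_rec f a : cinv f a = (f [::])^-1 *
  ((a == [::])%:R - \sum_(i < size a) f (take i.+1 a) * cinv f (drop i.+1 a)).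
Proof.
rewrite /cinv; case: a => [|x a] /=; first by rewrite big_ord0 subr0.
congr (_ * (_ - _)); apply: eq_bigr => i _; congr (_ * _).
by apply: cinv_auxE; rewrite size_drop /=; lia.
Qed.

Lemma cinv_nil f : cinv f [::] = (f [::])^-1.
Proof. by rewrite cinv_rec big_ord0 subr0 mulr1. Qed.

Lemma conv_cinv f a : f [::] != 0 -> conv f (cinv f) a = E a.
Proof.
move=> Hf; rewrite /conv big_ord_recl /= take0 drop0 [cinv f a]cinv_rec.
by rewrite mulrA mulfV // mul1r subrK.
Qed.

Lemma cinv_conv f a : f [::] != 0 -> conv (cinv f) f a = E a.
Proof.
move=> Hf.
have Hg : cinv f [::] != 0 by rewrite cinv_nil invr_eq0.
have Hfh : forall b, f b = cinv (cinv f) b.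
  move=> b; rewrite -[LHS]conv_E_r -(conv_ext _ _ _ _ b (fun=> erefl) (fun c => conv_cinv (cinv f) c Hg)).
  by rewrite -conv_assoc (conv_ext _ _ _ _ b (fun c => conv_cinv f c Hf) (fun=> erefl)) conv_E_l.
by rewrite (conv_ext _ _ _ _ a (fun=> erefl) Hfh) conv_cinv.
Qed.

Lemma inv_uniq_r f g : f [::] != 0 -> fun_eq (conv f g) (@E) -> fun_eq g (cinv f).
Proof.
move=> Hf H a ca; rewrite -conv_E_l.
rewrite -(conv_ext _ _ g g a (fun c => cinv_conv f c Hf) (fun=> erefl)).
by rewrite conv_assoc (conv_congr (cinv f) (cinv f) _ (@E) a (fun _ _ => erefl) H ca) conv_E_r.
Qed.

Lemma inv_uniq_l f g : f [::] != 0 -> fun_eq (conv g f) (@E) -> fun_eq g (cinv f).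
Proof.
move=> Hf H a ca; rewrite -conv_E_r.
rewrite -(conv_ext g g _ _ a (fun=> erefl) (fun c => conv_cinv f c Hf)).
by rewrite -conv_assoc (conv_congr _ (@E) (cinv f) (cinv f) a H (fun _ _ => erefl) ca) conv_E_l.
Qed.

Lemma fun_eq_sym f g : fun_eq f g -> fun_eq g f.
Proof. by move=> H a ca; rewrite H. Qed.

Lemma fun_eq_trans f g h : fun_eq f g -> fun_eq g h -> fun_eq f h.
Proof. by move=> H1 H2 a ca; rewrite H1 ?H2. Qed.

Lemma cinv_congr f f' : f [::] != 0 -> fun_eq f f' -> fun_eq (cinv f) (cinv f').
Proof.
move=> Hf H; have Hf' : f' [::] != 0 by rewrite -H.
apply: inv_uniq_r => // a ca.
by rewrite -(conv_congr f f' (cinv f) (cinv f) a H (fun _ _ => erefl) ca) conv_cinv.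
Qed.

Lemma cinv_mul f g : f [::] != 0 -> g [::] != 0 ->
  fun_eq (cinv (conv f g)) (conv (cinv g) (cinv f)).
Proof.
move=> Hf Hg; apply: fun_eq_sym; apply: inv_uniq_r.
  by rewrite conv_nil mulf_neq0.
move=> a _; rewrite conv_assoc.
rewrite (conv_ext f f _ (cinv f) a (fun=> erefl)); first exact: conv_cinv.
move=> b; rewrite -conv_assoc.
rewrite (conv_ext _ (@E) (cinv f) (cinv f) b (fun c => conv_cinv g c Hg) (fun=> erefl)).
exact: conv_E_l.
Qed.

Lemma cinvK f : f [::] != 0 -> fun_eq (cinv (cinv f)) f.
Proof.
move=> Hf; apply: fun_eq_sym; apply: inv_uniq_r.
  by rewrite cinv_nil invr_eq0.
by move=> a _; rewrite cinv_conv.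
Qed.

Lemma bar_conv f g a : bar (conv f g) a = conv (bar f) (bar g) a.
Proof.
rewrite /bar /conv mulr_sumr; apply: eq_bigr => i _.
rewrite -{1}(cat_take_drop i a) sumn_cat exprD; ring.
Qed.

Lemma bar_E a : bar (@E) a = E a.
Proof. by case: a => [|x a]; rewrite /bar /E /= ?mulr0 ?mul1r. Qed.

Lemma bar_nil f : bar f [::] = f [::].
Proof. by rewrite /bar /= mul1r. Qed.

Lemma bar_cinv f : f [::] != 0 -> fun_eq (bar (cinv f)) (cinv (bar f)).
Proof.
move=> Hf; apply: inv_uniq_r; first by rewrite bar_nil.
by move=> a _; rewrite -bar_conv /bar conv_cinv // -/(bar (@E) a) bar_E.
Qed.

Lemma bar_congr f g : fun_eq f g -> fun_eq (bar f) (bar g).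
Proof. by move=> H a ca; rewrite /bar H. Qed.

Definition R f := fun a => f (rev a).

Lemma R_conv f g a : conv f g (rev a) = conv (R g) (R f) a.
Proof.
rewrite /conv size_rev (reindex_inj rev_ord_inj) /=; apply: eq_bigr => i _.
rewrite /R take_rev drop_rev mulrC; congr (g (rev (take _ _)) * f (rev (drop _ _))).
  by case: i => i /= Hi; lia.
by case: i => i /= Hi; lia.
Qed.

Lemma R_E a : R (@E) a = E a.
Proof. by rewrite /R /E; case: a => //= x a; rewrite rev_cons; case: (rev a). Qed.

Lemma R_cinv f : f [::] != 0 -> fun_eq (R (cinv f)) (cinv (R f)).
Proof.
move=> Hf; apply: inv_uniq_l => // a _.
by rewrite -R_conv conv_cinv // -/(R (@E) a) R_E.
Qed.

Lemma R_congr f g : fun_eq f g -> fun_eq (R f) (R g).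
Proof. by move=> H a ca; rewrite /R H // /is_comp all_rev. Qed.

Lemma R_bar f a : R (bar f) a = bar (R f) a.
Proof. by rewrite /R /bar sumn_rev. Qed.

Lemma conv_split (c : seq nat -> K) k a : size a = k.+1 ->
  conv c c a = c [::] * c a + (\sum_(i < k) c (take i.+1 a) * c (drop i.+1 a)) + c a * c [::].
Proof.
move=> Ha; rewrite /conv Ha big_ord_recl big_ord_recr /= take0 drop0 addrA.
congr (_ + _ + _).
by rewrite /bump /= add1n -Ha take_size drop_size.
Qed.

Lemma sqrt_uniq (b b' : seq nat -> K) : (2%:R : K) != 0 -> b [::] = 1 -> b' [::] = 1 ->
  fun_eq (conv b b) (conv b' b') -> fun_eq b b'.
Proof.
move=> h2 hb hb' H a; move: {-1}(size a) (leqnn (size a)) => n.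
elim: n a => [|n IH] a.
  by rewrite leqn0 => /eqP/size0nil -> _; rewrite hb hb'.
case Ea: (size a) => [|k] Hk ca.
  by move/size0nil: Ea => ->; rewrite hb hb'.
have := H a ca; rewrite (conv_split b _ _ Ea) (conv_split b' _ _ Ea) hb hb'.
have -> : \sum_(i < k) b (take i.+1 a) * b (drop i.+1 a) =
          \sum_(i < k) b' (take i.+1 a) * b' (drop i.+1 a).
  apply: eq_bigr => [[i Hi]] _ /=.
  rewrite !IH ?comp_take ?comp_drop // ?size_take ?size_drop ?Ea; try lia.
  by case: ifP; lia.
set S := \sum_(i < k) _ => E1.
apply: (mulfI h2); apply: (addIr S).
transitivity (1 * b a + S + b a * 1); first ring.
by rewrite E1; ring.
Qed.

Lemma feq_refl f : fun_eq f f.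
Proof. by []. Qed.

Lemma feq_glob f g : (forall a, f a = g a) -> fun_eq f g.
Proof. by move=> H a _. Qed.

Lemma ceq f f' g g' : fun_eq f f' -> fun_eq g g' -> fun_eq (conv f g) (conv f' g').
Proof. by move=> H1 H2 a ca; apply: conv_congr. Qed.

Lemma assoc_feq f g h : fun_eq (conv (conv f g) h) (conv f (conv g h)).
Proof. by apply: feq_glob => a; apply: conv_assoc. Qed.

Lemma El_feq f : fun_eq (conv (@E) f) f.
Proof. by apply: feq_glob => a; apply: conv_E_l. Qed.

Lemma Er_feq f : fun_eq (conv f (@E)) f.
Proof. by apply: feq_glob => a; apply: conv_E_r. Qed.

Lemma cinvl_feq f : f [::] != 0 -> fun_eq (conv (cinv f) f) (@E).
Proof. by move=> H; apply: feq_glob => a; apply: cinv_conv. Qed.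

Lemma cinvr_feq f : f [::] != 0 -> fun_eq (conv f (cinv f)) (@E).
Proof. by move=> H; apply: feq_glob => a; apply: conv_cinv. Qed.

Arguments feq_glob {f g}.
Arguments fun_eq_trans {f g h}.
Arguments fun_eq_sym {f g}.
Arguments ceq {f f' g g'}.
Arguments cinv_congr {f f'}.
Arguments cinv_mul {f g}.
Arguments cinvK {f}.
Arguments bar_congr {f g}.
Arguments cinvl_feq {f}.
Arguments cinvr_feq {f}.

Lemma one_neq0 : (1 : K) != 0. Proof. exact: oner_neq0. Qed.

Lemma key_sq (a b : seq nat -> K) : a [::] = 1 -> b [::] = 1 -> even_fun a -> odd_fun b ->
  fun_eq (conv (cinv (bar (conv a b))) (conv a b)) (conv b b).
Proof.
move=> ha hb Ea Ob.
have a0 : a [::] != 0 by rewrite ha one_neq0.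
have b0 : b [::] != 0 by rewrite hb one_neq0.
have cb0 : cinv b [::] != 0 by rewrite cinv_nil invr_eq0.
have p0 : bar (conv a b) [::] != 0 by rewrite bar_nil conv_nil ha hb mulr1 one_neq0.
have S1 : fun_eq (bar (conv a b)) (conv a (cinv b)).
  apply: fun_eq_trans (feq_glob (bar_conv a b)) _; exact: ceq.
have S3 : fun_eq (cinv (bar (conv a b))) (conv b (cinv a)).
  apply: fun_eq_trans (cinv_congr p0 S1) _.
  apply: fun_eq_trans (cinv_mul a0 cb0) _.
  exact: ceq (cinvK b0) (feq_refl _).
apply: fun_eq_trans (ceq S3 (feq_refl _)) _.
apply: fun_eq_trans (assoc_feq _ _ _) _.
apply: ceq => //.
apply: fun_eq_trans (fun_eq_sym (assoc_feq _ _ _)) _.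
apply: fun_eq_trans (ceq (cinvl_feq a0) (feq_refl _)) _.
exact: El_feq.
Qed.

Lemma fact_uniq (a b a' b' : seq nat -> K) : (2%:R : K) != 0 ->
  a [::] = 1 -> b [::] = 1 -> a' [::] = 1 -> b' [::] = 1 ->
  even_fun a -> odd_fun b -> even_fun a' -> odd_fun b' ->
  fun_eq (conv a b) (conv a' b') -> fun_eq a a' /\ fun_eq b b'.
Proof.
move=> h2 ha hb ha' hb' Ea Ob Ea' Ob' H.
have b0 : b [::] != 0 by rewrite hb one_neq0.
have b0' : b' [::] != 0 by rewrite hb' one_neq0.
have p0 : bar (conv a b) [::] != 0 by rewrite bar_nil conv_nil ha hb mulr1 one_neq0.
have Hbb : fun_eq b b'.
  apply: sqrt_uniq => //.
  apply: fun_eq_trans (fun_eq_sym (key_sq a b ha hb Ea Ob)) _.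
  apply: fun_eq_trans _ (key_sq a' b' ha' hb' Ea' Ob').
  apply: ceq => //; apply: cinv_congr => //; exact: bar_congr.
split => //.
apply: fun_eq_trans (fun_eq_sym (Er_feq a)) _.
apply: fun_eq_trans (ceq (feq_refl a) (fun_eq_sym (cinvr_feq b0))) _.
apply: fun_eq_trans (fun_eq_sym (assoc_feq _ _ _)) _.
apply: fun_eq_trans (ceq H (cinv_congr b0 Hbb)) _.
apply: fun_eq_trans (assoc_feq _ _ _) _.
apply: fun_eq_trans (ceq (feq_refl a') (cinvr_feq b0')) _.
exact: Er_feq.
Qed.

Lemma comps_rev_sum (G : seq nat -> K) n :
  \sum_(c <- comps n) G c = \sum_(c <- comps n) G (rev c).
Proof.
rewrite -(big_map rev xpredT G); apply: perm_big.
apply: uniq_perm; first exact: uniq_comps_aux.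
  by rewrite map_inj_uniq; [exact: uniq_comps_aux| exact: (can_inj revK)].
move=> b; rewrite -{2}(revK b) mem_map; last exact: (can_inj revK).
by rewrite !mem_comps /is_comp all_rev sumn_rev.
Qed.

Lemma sum_ref_cat (F : seq nat -> K) a a' :
  \sum_(b <- refinements (a ++ a')) F b =
  \sum_(c <- refinements a) \sum_(r <- refinements a') F (c ++ r).
Proof.
elim: a F => [|x a IH] F /=; first by rewrite big_cons big_nil addr0.
rewrite !big_allpairs_dep; apply: eq_bigr => c _.
rewrite IH; apply: eq_bigr => c' _.
by apply: eq_bigr => r _; rewrite catA.
Qed.

Lemma sum_ref1 (F : seq nat -> K) x :
  \sum_(b <- refinements [:: x]) F b = \sum_(c <- comps x) F c.
Proof.
have -> : refinements [:: x] = [seq c ++ r | c <- comps x, r <- [:: [::]]] by [].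
rewrite big_allpairs_dep; apply: eq_bigr => c _.
by rewrite big_seq1 cats0.
Qed.

Lemma sum_ref_rev (F : seq nat -> K) a :
  \sum_(b <- refinements (rev a)) F b = \sum_(b <- refinements a) F (rev b).
Proof.
elim: a F => [|x a IH] F; first by rewrite /= !big_seq1.
rewrite rev_cons -cats1 sum_ref_cat IH.
have -> : refinements (x :: a) = [seq c ++ r | c <- comps x, r <- refinements a] by [].
rewrite big_allpairs_dep [RHS]exchange_big.
apply: eq_bigr => c _; rewrite sum_ref1 comps_rev_sum.
by apply: eq_bigr => r _; rewrite rev_cat.
Qed.

Lemma ref_comp a b : b \in refinements a -> is_comp b.
Proof.
elim: a b => [|x a IH] b /=; first by rewrite in_cons in_nil orbF => /eqP ->.
move=> /allpairsPdep[c [r [Hc Hr ->]]].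
rewrite /is_comp all_cat; apply/andP; split; last exact: IH.
by move: Hc; rewrite mem_comps => /andP[].
Qed.

Lemma compT_of_R (f g : seq nat -> K) : fun_eq (R f) g -> compT_eq f g.
Proof.
move=> H a _; rewrite /Fval sum_ref_rev.
by apply: eq_big_seq => b Hb; apply: H; exact: ref_comp Hb.
Qed.


Arguments R_congr {f g}.
Arguments bar_cinv {f}.
Arguments R_cinv {f}.

Lemma main_aux (hK : (2%:R : K) != 0) (zp zm yp ym : seq nat -> K) :
  character zp -> even_fun zp -> character zm -> odd_fun zm ->
  fun_eq (@zeta K) (conv zp zm) ->
  character yp -> even_fun yp -> character ym -> odd_fun ym ->
  fun_eq (cinv (@zeta K)) (conv yp ym) ->
  compT_eq zp zp /\ compT_eq zm (cinv ym).
Proof.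
move=> [zp1 _] Ezp [zm1 _] Ozm HZ [yp1 _] Eyp [ym1 _] Oym HY.
have zp0 : zp [::] != 0 by rewrite zp1 one_neq0.
have zm0 : zm [::] != 0 by rewrite zm1 one_neq0.
have Z1 : zeta K [::] = 1 by [].
have Z0 : zeta K [::] != 0 by rewrite Z1 one_neq0.
have czp0 : cinv zp [::] != 0 by rewrite cinv_nil invr_eq0.
have czm0 : cinv zm [::] != 0 by rewrite cinv_nil invr_eq0.
have czp1 : cinv zp [::] = 1 by rewrite cinv_nil zp1 invr1.
have Rzp0 : R zp [::] != 0 by [].
have Rzm0 : R zm [::] != 0 by [].
have Evcp : even_fun (cinv zp).
  move=> a ca; rewrite (bar_cinv zp0 a ca).
  by apply: (cinv_congr _ Ezp) => //; rewrite bar_nil.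
set nu := conv (conv zp (cinv zm)) (cinv zp).
have nu1 : nu [::] = 1 by rewrite /nu !conv_nil zp1 czp1 cinv_nil zm1 invr1 !mulr1.
have nu0 : nu [::] != 0 by rewrite nu1 one_neq0.
have Onu : odd_fun nu.
  have B : fun_eq (bar nu) (conv (conv zp zm) (cinv zp)).
    apply: fun_eq_trans (feq_glob (bar_conv _ _)) _.
    apply: ceq; last exact: Evcp.
    apply: fun_eq_trans (feq_glob (bar_conv _ _)) _.
    apply: ceq => //.
    apply: fun_eq_trans (bar_cinv zm0) _.
    apply: fun_eq_trans (cinv_congr _ Ozm) _; first by rewrite bar_nil.
    exact: cinvK.
  have C : fun_eq (cinv nu) (conv (conv zp zm) (cinv zp)).
    apply: fun_eq_trans (cinv_mul _ czp0) _; first by rewrite conv_nil mulf_neq0.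
    apply: fun_eq_trans (ceq (cinvK zp0) (cinv_mul zp0 czm0)) _.
    apply: fun_eq_trans (ceq (feq_refl _) (ceq (cinvK zm0) (feq_refl _))) _.
    exact: fun_eq_sym (assoc_feq _ _ _).
  exact: fun_eq_trans B (fun_eq_sym C).
have P1 : fun_eq (conv yp ym) (conv (cinv zp) nu).
  apply: fun_eq_trans (fun_eq_sym HY) _.
  apply: fun_eq_trans (cinv_congr Z0 HZ) _.
  apply: fun_eq_trans (cinv_mul zp0 zm0) _.
  apply: fun_eq_sym; rewrite /nu.
  apply: fun_eq_trans (fun_eq_sym (assoc_feq _ _ _)) _.
  apply: ceq => //.
  apply: fun_eq_trans (fun_eq_sym (assoc_feq _ _ _)) _.
  apply: fun_eq_trans (ceq (cinvl_feq zp0) (feq_refl _)) _.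
  exact: El_feq.
have [Hyp _] := fact_uniq _ _ _ _ hK yp1 ym1 czp1 nu1 Eyp Oym Evcp Onu P1.
have cRzp1 : cinv (R zp) [::] = 1 by rewrite cinv_nil /R /= zp1 invr1.
have cRzm1 : cinv (R zm) [::] = 1 by rewrite cinv_nil /R /= zm1 invr1.
have EvR : even_fun (cinv (R zp)).
  move=> a ca; rewrite (bar_cinv Rzp0 a ca).
  apply: (cinv_congr _ _ a ca); first by rewrite bar_nil.
  apply: fun_eq_trans (fun_eq_sym (feq_glob (R_bar zp))) _.
  exact: R_congr Ezp.
have OdR : odd_fun (cinv (R zm)).
  move=> a ca; rewrite (bar_cinv Rzm0 a ca).
  apply: (cinv_congr _ _ a ca); first by rewrite bar_nil.
  apply: fun_eq_trans (fun_eq_sym (feq_glob (R_bar zm))) _.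
  apply: fun_eq_trans (R_congr Ozm) _.
  exact: R_cinv zm0.
have P2 : fun_eq (conv yp ym) (conv (cinv (R zp)) (cinv (R zm))).
  apply: fun_eq_trans (fun_eq_sym HY) _.
  have ZR : fun_eq (zeta K) (R (zeta K)) by move=> a _; rewrite /R /zeta size_rev.
  apply: fun_eq_trans (cinv_congr Z0 ZR) _.
  apply: fun_eq_trans (cinv_congr _ (R_congr HZ)) _; first by [].
  apply: fun_eq_trans (cinv_congr _ (feq_glob (R_conv zp zm))) _.
    by rewrite /R /= conv_nil zp1 zm1 mulr1 one_neq0.
  exact: cinv_mul.
have [HA HB] := fact_uniq _ _ _ _ hK yp1 ym1 cRzp1 cRzm1 Eyp Oym EvR OdR P2.
split; apply: compT_of_R.
  apply: fun_eq_trans (fun_eq_sym (cinvK Rzp0)) _.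
  apply: fun_eq_trans (cinv_congr _ (fun_eq_sym HA)) _; first by rewrite cRzp1 one_neq0.
  apply: fun_eq_trans (cinv_congr _ Hyp) _; first by rewrite yp1 one_neq0.
  exact: cinvK.
apply: fun_eq_trans (fun_eq_sym (cinvK Rzm0)) _.
exact: cinv_congr _ (fun_eq_sym HB); rewrite cRzm1 one_neq0.
Qed.

End S.

Theorem proposition8p2 (K : fieldType) (hK : (2%:R : K) != 0)
  (zp zm yp ym : seq nat -> K) :
  character zp -> even_fun zp -> character zm -> odd_fun zm ->
  fun_eq (@zeta K) (conv zp zm) ->
  character yp -> even_fun yp -> character ym -> odd_fun ym ->
  fun_eq (cinv (@zeta K)) (conv yp ym) ->
  compT_eq zp zp /\ compT_eq zm (cinv ym).
Proof. exact: main_aux. Qed.
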